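(* For all $A,B\in\mathbb{P}(n)$, if $A\preceq B$ then $A\preceq A*B\preceq B$.
   Context: $\mathbb{P}(n)$ denotes the cone of $n\times n$ positive definite Hermitian matrices and $\preceq$ is the Löwner order: $A\preceq B$ iff $B-A$ is positive semidefinite. For $A,B\in\mathbb{P}(n)$, with $\lambda_{\max},\lambda_{\min}$ the largest and smallest eigenvalues of $BA^{-1}$, define $A*B=\frac{1}{\sqrt{\lambda_{\min}}+\sqrt{\lambda_{\max}}}\left(B+\sqrt{\lambda_{\min}\lambda_{\max}}\,A\right)$. *)

(* Defs.v *)
From mathcomp Require Import all_boot all_order all_algebra.
Set Implicit Arguments. Unset Strict Implicit. Unset Printing Implicit Defensive.
Import Order.TTheory GRing.Theory Num.Theory.
Local Open Scope ring_scope.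

Definition adjmx (C : numClosedFieldType) m p (M : 'M[C]_(m, p)) : 'M[C]_(p, m) :=
  (map_mx Num.conj M)^T.

Definition hermmx (C : numClosedFieldType) n (A : 'M[C]_n) : Prop :=
  adjmx A = A.

Definition posdefmx (C : numClosedFieldType) n (A : 'M[C]_n) : Prop :=
  hermmx A /\ forall x : 'cV[C]_n, x != 0 -> 0 < (adjmx x *m A *m x) 0 0.

Definition psdmx (C : numClosedFieldType) n (A : 'M[C]_n) : Prop :=
  hermmx A /\ forall x : 'cV[C]_n, 0 <= (adjmx x *m A *m x) 0 0.

Definition loewner (C : numClosedFieldType) n (A B : 'M[C]_n) : Prop :=
  psdmx (B - A).

Definition is_max_eigenvalue (C : numClosedFieldType) n (M : 'M[C]_n) (l : C) : Prop :=
  eigenvalue M l /\ forall a, eigenvalue M a -> a <= l.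
Definition is_min_eigenvalue (C : numClosedFieldType) n (M : 'M[C]_n) (l : C) : Prop :=
  eigenvalue M l /\ forall a, eigenvalue M a -> l <= a.

(* A * B, given lmin = lambda_min(B A^{-1}) and lmax = lambda_max(B A^{-1}) *)
Definition star_mean (C : numClosedFieldType) n (lmin lmax : C) (A B : 'M[C]_n) : 'M[C]_n :=
  (sqrtC lmin + sqrtC lmax)^-1 *: (B + sqrtC (lmin * lmax) *: A).

(* Main.v *)
Require Import Defs.
From mathcomp Require Import all_boot all_order all_algebra.
From mathcomp Require Import sesquilinear spectral ring.
Set Implicit Arguments. Unset Strict Implicit. Unset Printing Implicit Defensive.
Import Order.TTheory GRing.Theory Num.Theory.
Local Open Scope ring_scope.
Lemma adjmxE {C : numClosedFieldType} m p (M : 'M[C]_(m, p)) :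
  adjmx M = map_mx Num.conj (M ^T).
Proof. by apply/matrixP => i j; rewrite !mxE. Qed.

Lemma adjmxK {C : numClosedFieldType} m p (M : 'M[C]_(m, p)) : adjmx (adjmx M) = M.
Proof. by apply/matrixP => i j; rewrite !mxE conjCK. Qed.

Lemma adjmxM {C : numClosedFieldType} m p q (M : 'M[C]_(m, p)) (N : 'M[C]_(p, q)) :
  adjmx (M *m N) = adjmx N *m adjmx M.
Proof.
apply/matrixP => i j; rewrite !mxE rmorph_sum; apply: eq_bigr => k _.
by rewrite !mxE rmorphM mulrC.
Qed.

Lemma adjmxD {C : numClosedFieldType} m p (M N : 'M[C]_(m, p)) :
  adjmx (M + N) = adjmx M + adjmx N.
Proof. by apply/matrixP => i j; rewrite !mxE rmorphD. Qed.

Lemma adjmxN {C : numClosedFieldType} m p (M : 'M[C]_(m, p)) :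
  adjmx (- M) = - adjmx M.
Proof. by apply/matrixP => i j; rewrite !mxE rmorphN. Qed.

Lemma adjmxZ {C : numClosedFieldType} m p c (M : 'M[C]_(m, p)) :
  adjmx (c *: M) = c^* *: adjmx M.
Proof. by apply/matrixP => i j; rewrite !mxE rmorphM. Qed.

Lemma adjmx1 {C : numClosedFieldType} n : adjmx (1%:M : 'M[C]_n) = 1%:M.
Proof. by apply/matrixP => i j; rewrite !mxE eq_sym; case: eqP => _; rewrite ?rmorph1 ?rmorph0. Qed.

Lemma adjmx_unit {C : numClosedFieldType} n (M : 'M[C]_n) :
  M \in unitmx -> adjmx (invmx M) *m adjmx M = 1%:M /\ adjmx M *m adjmx (invmx M) = 1%:M.
Proof.
move=> Mu; split; rewrite -adjmxM ?mulmxV ?mulVmx // adjmx1 //.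
Qed.

Lemma adjmx_unitmx {C : numClosedFieldType} n (M : 'M[C]_n) :
  M \in unitmx -> adjmx M \in unitmx.
Proof. by move=> /adjmx_unit [_ /mulmx1_unit []]. Qed.

Lemma invmx_uniq {C : numClosedFieldType} n (M X : 'M[C]_n) :
  M *m X = 1%:M -> invmx M = X.
Proof.
move=> h; have [Mu _] := mulmx1_unit h.
by rewrite -(mulKmx Mu X) h mulmx1.
Qed.

Lemma adjmx_inv {C : numClosedFieldType} n (M : 'M[C]_n) :
  M \in unitmx -> invmx (adjmx M) = adjmx (invmx M).
Proof.
by move=> Mu; have [h1 h2] := adjmx_unit Mu; apply: invmx_uniq.
Qed.



Lemma row_neq0 {C : numClosedFieldType} n (M : 'M[C]_n) i :
  M \in unitmx -> row i M != 0.
Proof.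
move=> Mu; apply/eqP => h.
have : (delta_mx 0 i : 'rV_n) *m M *m invmx M = 0 by rewrite -(rowE i M) h mul0mx.
rewrite mulmxK // => /matrixP /(_ 0 i); rewrite !mxE !eqxx /=.
by move/eqP; rewrite oner_eq0.
Qed.

Lemma row_col_mul {C : numClosedFieldType} m p q (M : 'M[C]_(m, p)) (N : 'M[C]_(p, q)) i j :
  (row i M *m col j N) 0 0 = (M *m N) i j.
Proof. by rewrite !mxE; apply: eq_bigr => k _; rewrite !mxE. Qed.

Lemma adjmx_row {C : numClosedFieldType} m p (M : 'M[C]_(m, p)) i :
  adjmx (row i M) = col i (adjmx M).
Proof. by apply/matrixP => a b; rewrite !mxE. Qed.

Lemma herm_hermsym {C : numClosedFieldType} n (A : 'M[C]_n) :
  hermmx A -> A \is hermsymmx.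
Proof.
by move=> hA; rewrite is_hermitianmxE expr0 scale1r -adjmxE hA.
Qed.

Lemma unitary_adj {C : numClosedFieldType} n (Q : 'M[C]_n) :
  Q \is unitarymx -> Q *m adjmx Q = 1%:M /\ adjmx Q *m Q = 1%:M /\ invmx Q = adjmx Q.
Proof.
move=> Qu; have e : invmx Q = adjmx Q by rewrite invmx_unitary // adjmxE.
have Qunit := unitarymx_unit Qu.
by rewrite -e mulmxV // mulVmx.
Qed.
Lemma adjmx_eq0 {C : numClosedFieldType} m p (M : 'M[C]_(m, p)) :
  (adjmx M == 0) = (M == 0).
Proof.
have a0 : adjmx (0 : 'M[C]_(m, p)) = 0 by apply/matrixP => i j; rewrite !mxE rmorph0.
apply/eqP/eqP => h; last by rewrite h a0.
by rewrite -(adjmxK M) h; apply/matrixP => i j; rewrite !mxE rmorph0.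
Qed.

Lemma quad_diag {C : numClosedFieldType} n (z : 'cV[C]_n) (k : 'rV[C]_n) :
  (adjmx z *m diag_mx k *m z) 0 0 = \sum_j k 0 j * `|z j 0| ^+ 2.
Proof.
rewrite mxE; apply: eq_bigr => j _; rewrite mul_mx_diag !mxE normCKC.
by rewrite mulrCA mulrA.
Qed.

Lemma quad_id {C : numClosedFieldType} n (z : 'cV[C]_n) :
  (adjmx z *m z) 0 0 = \sum_j `|z j 0| ^+ 2.
Proof.
by rewrite mxE; apply: eq_bigr => j _; rewrite !mxE normCKC.
Qed.

Lemma key {C : numClosedFieldType} n (A B : 'M[C]_n) (mu : C) :
  posdefmx A -> hermmx B ->
  (forall a, eigenvalue (B *m invmx A) a -> mu <= a) ->
  forall x : 'cV_n, mu * (adjmx x *m A *m x) 0 0 <= (adjmx x *m B *m x) 0 0.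
Proof.
move=> [hA pA] hB hev x.
have An : A \is normalmx := hermitian_normalmx (herm_hermsym hA).
set P := spectralmx A; set a := spectral_diag A.
have /orthomx_spectralP AE := An.
have [PP' [P'P Pinv]] := unitary_adj (spectral_unitarymx A).
have Pu : P \in unitmx := spectral_unit A.
rewrite -/P -/a Pinv in AE.
have a_gt0 : forall i, 0 < a 0 i.
  move=> i; have := pA (adjmx (row i P)).
  rewrite adjmx_eq0 row_neq0 // adjmxK -row_mul adjmx_row row_col_mul.
  rewrite AE !mulmxA PP' mul1mx -mulmxA PP' mulmx1 mxE eqxx mulr1n.
  by apply.
pose D := diag_mx (\row_i sqrtC (a 0 i)).
pose Di := diag_mx (\row_i (sqrtC (a 0 i))^-1).
have DDi : D *m Di = 1%:M.
  rewrite mulmx_diag; apply/matrixP => i j; rewrite !mxE mulfV //.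
  by rewrite lt0r_neq0 // sqrtC_gt0.
have adjD : adjmx D = D.
  apply/matrixP => i j; rewrite !mxE eq_sym; case: eqVneq => [->|_].
    by rewrite !mulr1n conj_Creal // sqrtC_real // ltW.
  by rewrite !mulr0n rmorph0.
have DD : D *m D = diag_mx a.
  rewrite mulmx_diag; apply/matrixP => i j; rewrite !mxE -expr2 sqrtCK.
  by [].
have [R RE] : {R | R = D *m P} by exists (D *m P).
have Ru : R \in unitmx by rewrite RE unitmx_mul Pu andbT; case: (mulmx1_unit DDi).
have AR : A = adjmx R *m R.
  by rewrite RE AE adjmxM adjD !mulmxA -(mulmxA _ D D) DD.
have [S [SR RS]] : {S | S *m R = 1%:M /\ R *m S = 1%:M}.
  by exists (invmx R); rewrite mulVmx // mulmxV.
have invA : invmx A = S *m adjmx S.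
  rewrite AR; apply: invmx_uniq.
  rewrite mulmxA -(mulmxA _ R S) RS mulmx1 -adjmxM SR adjmx1 //.
pose K := adjmx S *m B *m S.
have hK : hermmx K by rewrite /hermmx /K !adjmxM adjmxK hB mulmxA.
have Kn : K \is normalmx := hermitian_normalmx (herm_hermsym hK).
set Q := spectralmx K; set k := spectral_diag K.
have /orthomx_spectralP KE := Kn.
have [QQ' [Q'Q Qinv]] := unitary_adj (spectral_unitarymx K).
have Qu : Q \in unitmx := spectral_unit K.
rewrite -/Q -/k Qinv in KE.
have SR' : adjmx S *m adjmx R = 1%:M by rewrite -adjmxM RS adjmx1.
have R'S' : adjmx R *m adjmx S = 1%:M by rewrite -adjmxM SR adjmx1.
have ev : forall i, mu <= k 0 i.
  move=> i; apply: hev; apply/eigenvalueP; exists (row i Q *m adjmx S).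
    have rowK : row i Q *m K = k 0 i *: row i Q.
      rewrite KE -row_mul !mulmxA QQ' mul1mx mul_diag_mx.
      by apply/matrixP => ? j; rewrite !mxE.
    have -> : row i Q *m adjmx S *m (B *m invmx A) = row i Q *m K *m adjmx S.
      by rewrite invA /K !mulmxA.
    by rewrite rowK scalemxAl.
  apply/eqP => h.
  have : row i Q *m adjmx S *m adjmx R = 0 by rewrite h mul0mx.
  by rewrite -mulmxA SR' mulmx1; apply/eqP; rewrite row_neq0.
have BE : B = adjmx R *m K *m R.
  by rewrite /K !mulmxA R'S' mul1mx -mulmxA SR mulmx1.
pose z := Q *m (R *m x).
have xBx : adjmx x *m B *m x = adjmx z *m diag_mx k *m z.
  by rewrite BE KE /z !adjmxM !mulmxA.
have xAx : adjmx x *m A *m x = adjmx z *m z.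
  by rewrite AR /z !adjmxM !mulmxA -(mulmxA _ (adjmx Q) Q) Q'Q mulmx1.
rewrite xBx xAx quad_diag quad_id mulr_sumr; apply: ler_sum => j _.
by rewrite ler_wpM2r // exprn_ge0.
Qed.
Definition qf {C : numClosedFieldType} n (x : 'cV[C]_n) (M : 'M[C]_n) :=
  (adjmx x *m M *m x) 0 0.

Lemma qfD {C : numClosedFieldType} n (x : 'cV[C]_n) M N : qf x (M + N) = qf x M + qf x N.
Proof. by rewrite /qf mulmxDr mulmxDl mxE. Qed.
Lemma qfN {C : numClosedFieldType} n (x : 'cV[C]_n) M : qf x (- M) = - qf x M.
Proof. by rewrite /qf mulmxN mulNmx mxE. Qed.
Lemma qfZ {C : numClosedFieldType} n (x : 'cV[C]_n) c M : qf x (c *: M) = c * qf x M.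
Proof. by rewrite /qf -scalemxAr -scalemxAl mxE. Qed.

Lemma posdef_ge0 {C : numClosedFieldType} n (A : 'M[C]_n) x : posdefmx A -> 0 <= qf x A.
Proof.
move=> [_ pA]; case: (eqVneq x 0) => [->|/pA /ltW //].
by rewrite /qf mulmx0 mxE.
Qed.

Lemma posdef_unit {C : numClosedFieldType} n (A : 'M[C]_n) : posdefmx A -> A \in unitmx.
Proof.
move=> [_ pA]; rewrite unitmxE unitfE; apply/det0P => -[v vn0 vA].
have := pA (adjmx v); rewrite adjmx_eq0 vn0 adjmxK vA mul0mx mxE => /(_ isT).
by rewrite ltxx.
Qed.

Lemma adj_real {C : numClosedFieldType} n c (M : 'M[C]_n) :
  0 <= c -> adjmx (c *: M) = c *: adjmx M.
Proof. by move=> c0; rewrite adjmxZ conj_Creal // ger0_real. Qed.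

Theorem proposition3 (C : numClosedFieldType) (n : nat) (A B : 'M[C]_n)
    (lmin lmax : C) :
  posdefmx A -> posdefmx B -> loewner A B ->
  is_min_eigenvalue (B *m invmx A) lmin ->
  is_max_eigenvalue (B *m invmx A) lmax ->
  loewner A (star_mean lmin lmax A B) /\ loewner (star_mean lmin lmax A B) B.
Proof.
move=> pAd pBd [_ hAB] [evmin minP] [evmax _].
have hA := pAd.1; have hB := pBd.1.
have Kmin := key pAd hB minP.
have Au := posdef_unit pAd.
have lmin1 : 1 <= lmin.
  have /eigenvalueP [v vE vn0] := evmin.
  have vB : v *m B = lmin *: (v *m A).
    have := congr1 (mulmx^~ A) vE.
    by rewrite -!mulmxA mulVmx // mulmx1 -scalemxAl.
  have xpos := (pAd.2 (adjmx v)); rewrite adjmx_eq0 vn0 adjmxK in xpos.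
  have := hAB (adjmx v); rewrite -/(qf _ _) qfD qfN /qf adjmxK subr_ge0 vB.
  rewrite -scalemxAl [X in _ <= X]mxE -{1}[(v *m A *m adjmx v) 0 0]mul1r.
  by rewrite ler_pM2r //; apply: xpos.
have lmm : lmin <= lmax := minP _ evmax.
have lmax1 : 1 <= lmax := le_trans lmin1 lmm.
have lmin0 : 0 <= lmin := le_trans ler01 lmin1.
have lmax0 : 0 <= lmax := le_trans ler01 lmax1.
have a1 : 1 <= sqrtC lmin by rewrite -sqrtC1 ler_sqrtC // nnegrE ?ler01.
have b1 : 1 <= sqrtC lmax by rewrite -sqrtC1 ler_sqrtC // nnegrE ?ler01.
have ab : sqrtC (lmin * lmax) = sqrtC lmin * sqrtC lmax by rewrite sqrtCM.
have la : lmin = sqrtC lmin ^+ 2 by rewrite sqrtCK.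
rewrite /star_mean ab.
move: (sqrtC lmin) (sqrtC lmax) a1 b1 la => a b a1 b1 la.
have a0 : 0 <= a := le_trans ler01 a1.
have b0 : 0 <= b := le_trans ler01 b1.
have s0 : 0 < a + b by apply: (lt_le_trans ltr01); rewrite -[1]addr0 lerD.
have sn0 : a + b != 0 by rewrite lt0r_neq0.
have si0 : 0 <= (a + b)^-1 by rewrite invr_ge0 ltW.
have ab0 : 0 <= a * b by rewrite mulr_ge0.
have hS : hermmx ((a + b)^-1 *: (B + (a * b) *: A)).
  by rewrite /hermmx adj_real // adjmxD adj_real // hA hB.
split; split.
- by rewrite /hermmx adjmxD adjmxN hS hA.
- move=> x; rewrite -/(qf x _) qfD qfN qfZ qfD qfZ.
  have K := Kmin x; rewrite -/(qf x A) -/(qf x B) la in K.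
  have qA0 := posdef_ge0 x pAd.
  have -> : (a + b)^-1 * (qf x B + a * b * qf x A) - qf x A =
     (a + b)^-1 * ((qf x B - a ^+ 2 * qf x A) + ((a - 1) * (a + b)) * qf x A).
    by field.
  apply: mulr_ge0 => //; apply: addr_ge0; first by rewrite subr_ge0.
  by apply: mulr_ge0 => //; apply: mulr_ge0; rewrite ?subr_ge0 // ltW.
- by rewrite /hermmx adjmxD adjmxN hS hB.
- move=> x; rewrite -/(qf x _) qfD qfN qfZ qfD qfZ.
  have K := Kmin x; rewrite -/(qf x A) -/(qf x B) la in K.
  have qA0 := posdef_ge0 x pAd.
  have -> : qf x B - (a + b)^-1 * (qf x B + a * b * qf x A) =
     (a + b)^-1 * ((a + b - 1) * (qf x B - a ^+ 2 * qf x A) + (a * (a - 1) * (a + b)) * qf x A).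
    by field.
  apply: mulr_ge0 => //; apply: addr_ge0.
    apply: mulr_ge0; last by rewrite subr_ge0.
    by rewrite subr_ge0 -[1]addr0 lerD.
  by rewrite mulr_ge0 ?mulr_ge0 ?subr_ge0 // ltW.
Qed.
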